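(* Let $\mathcal{M}$ be a bounded graph matroid family. If there is a small $\mathcal{M}$-circuit with minimum degree one, then there exists an integer $m\ge2$ such that the star $K_{1,m}$ is the unique (up to isomorphism) small $\mathcal{M}$-circuit with at most $m$ edges and with minimum degree one.
   Context: All graphs are finite and simple and have no isolated vertices. A graph matroid family $\mathcal{M}$ assigns to every graph $G$ a matroid $\mathcal{M}(G)$ on $E(G)$ such that (i) every graph isomorphism $V(G)\to V(H)$ induces an isomorphism $\mathcal{M}(G)\to\mathcal{M}(H)$, and (ii) for every subgraph $H$ of $G$, $\mathcal{M}(H)$ is the restriction of $\mathcal{M}(G)$ to $E(H)$. Let $r(G)$ be the rank of $\mathcal{M}(G)$. $\mathcal{M}$ is bounded if $r(K_n)$ is bounded in $n$; its limit is the rank $r(\mathcal{M})$. An $\mathcal{M}$-circuit is a graph $G$ with $r(G)<|E(G)|$ and $r(G-e)=|E(G)|-1$ for all $e\in E(G)$; it is small if it has at most $r(\mathcal{M})$ edges. *)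

(* Defs.v *)
From mathcomp Require Import all_boot.
From mathcomp Require Import finmap.
Set Implicit Arguments.
Unset Strict Implicit.
Unset Printing Implicit Defensive.
Local Open Scope fset_scope.

(* A graph is given by its edge set: a finite set of 2-element sets of
   vertices (vertices are natural numbers).  Its vertex set is the union of
   its edges, so graphs have no isolated vertices by construction. *)
Definition graph := {fset {fset nat}}.

Definition is_graph (G : graph) : Prop := forall e, e \in G -> #|` e| = 2.

Definition vertices (G : graph) : {fset nat} := \bigcup_(e <- G) e.

Definition deg (G : graph) (v : nat) : nat := #|` [fset e in G | v \in e]|.

Definition min_deg_one (G : graph) : Prop :=
  (exists v, v \in vertices G /\ deg G v = 1) /\
  (forall v, v \in vertices G -> 1 <= deg G v).

(* H is a subgraph of G (no isolated vertices, so determined by edges) *)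
Definition subgraph (H G : graph) : Prop := is_graph H /\ H `<=` G.

Definition gmap (f : nat -> nat) (X : {fset {fset nat}}) : {fset {fset nat}} :=
  (fun e : {fset nat} => f @` e) @` X.

Definition graph_iso (f : nat -> nat) (G H : graph) : Prop :=
  {in vertices G &, injective f} /\
  f @` vertices G = vertices H /\
  gmap f G = H.

Definition isomorphic (G H : graph) : Prop := exists f, graph_iso f G H.

Definition K (n : nat) : graph :=
  [fset e in fpowerset [fset x | x in iota 0 n] | #|` e| == 2].

Definition star (m : nat) : graph :=
  (fun i : nat => [fset 0; i]) @` [fset x | x in iota 1 m].

Definition is_matroid (E : {fset {fset nat}}) (I : {fset {fset nat}} -> bool)
  : Prop :=
  [/\ I fset0,
      (forall X, I X -> X `<=` E),
      (forall X Y, I Y -> X `<=` Y -> I X) &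
      (forall X Y, I X -> I Y -> #|` X| < #|` Y| ->
         exists2 y, y \in Y `\` X & I (y |` X))].

(* A graph matroid gm_family: M G is the independence predicate of M(G). *)
Definition gm_family := graph -> {fset {fset nat}} -> bool.

Definition graph_matroid_family (M : gm_family) : Prop :=
  [/\ (forall G, is_graph G -> is_matroid G (M G)),
      (forall f G H, is_graph G -> is_graph H -> graph_iso f G H ->
         forall X, X `<=` G -> M H (gmap f X) = M G X) &
      (forall G H, is_graph G -> subgraph H G ->
         forall X, X `<=` H -> M H X = M G X)].

Definition rk (M : gm_family) (G : graph) : nat :=
  \max_(X <- fpowerset G | M G X) #|` X|.

Definition bounded (M : gm_family) : Prop :=
  exists B, forall n, rk M (K n) <= B.

Definition limit_rank (M : gm_family) (L : nat) : Prop :=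
  exists N, forall n, N <= n -> rk M (K n) = L.

Definition circuit (M : gm_family) (G : graph) : Prop :=
  rk M G < #|` G| /\ (forall e, e \in G -> rk M (G `\ e) = #|` G| - 1).

Definition small_circuit (M : gm_family) (L : nat) (G : graph) : Prop :=
  circuit M G /\ #|` G| <= L.

(* Main.v *)
Require Import Defs.
From mathcomp Require Import all_boot.
From mathcomp Require Import finmap.
From mathcomp Require Import zify.
Set Implicit Arguments.
Unset Strict Implicit.
Unset Printing Implicit Defensive.
Local Open Scope fset_scope.

Lemma card2P (e : {fset nat}) : #|` e| = 2 -> exists p q, p != q /\ e = [fset p; q].
Proof.
move=> he; have : e != fset0 by rewrite -cardfs_gt0 he.
case/fset0Pn => p pe.
have h1 : #|` e `\ p| == 1 by have := cardfsD1 p e; rewrite pe he add1n => -[->].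
case/cardfs1P: h1 => q hq.
have qe : q \in e `\ p by rewrite hq fset11.
exists p, q; split; first by move/fsetD1P: qe => [/negP qp _]; apply/negP => /eqP pq; apply: qp; rewrite pq.
by rewrite -(fsetD1K pe) hq.
Qed.

Lemma bigmax_attain (r : seq {fset {fset nat}}) (P : pred {fset {fset nat}}) F k :
  0 < k -> k <= \max_(i <- r | P i) F i -> exists2 i, i \in r & P i /\ k <= F i.
Proof.
move=> k0; elim: r => [|h t ih]; first by rewrite big_nil leqNgt k0.
rewrite big_cons; case: ifP => Ph.
  rewrite leq_max => /orP [hk|/ih [i it hi]]; first by exists h; rewrite ?mem_head.
  by exists i => //; rewrite inE it orbT.
by move/ih => [i it hi]; exists i => //; rewrite inE it orbT.
Qed.

Lemma verticesP (G : graph) (x : nat) : reflect (exists2 e, e \in G & x \in e) (x \in vertices G).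
Proof.
apply: (iffP (@bigfcupP _ _ G x (fun e => e) (fun _ => true))) => [[e /andP [eG _] xe]|[e eG xe]]; exists e => //.
by rewrite eG.
Qed.

Lemma vertices_gmap (f : nat -> nat) (G : graph) : vertices (gmap f G) = f @` vertices G.
Proof.
apply/fsetP => x; apply/verticesP/imfsetP.
  move=> [e' /imfsetP [e /= eG ->] /imfsetP [y /= ye ->]].
  by exists y => //; apply/verticesP; exists e.
move=> [y /= /verticesP [e eG ye] ->]; exists (f @` e).
  by apply/imfsetP; exists e.
by apply/imfsetP; exists y.
Qed.

Lemma gmap_graph (f : nat -> nat) (G : graph) : is_graph G -> {in vertices G &, injective f} -> is_graph (gmap f G).
Proof.
move=> gG inj e' /imfsetP [e /= eG ->].
rewrite card_in_imfset ?gG // => x y xe ye; apply: inj; apply/verticesP; by exists e.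
Qed.

Lemma gmap_iso (f : nat -> nat) (G : graph) : is_graph G -> {in vertices G &, injective f} -> graph_iso f G (gmap f G).
Proof. by move=> gG inj; split => //; rewrite vertices_gmap. Qed.

Lemma sub_graph (G H : graph) : is_graph G -> H `<=` G -> is_graph H.
Proof. by move=> gG /fsubsetP sub e eH; apply: gG; apply: sub. Qed.

Lemma graphU (G H : graph) : is_graph G -> is_graph H -> is_graph (G `|` H).
Proof. by move=> gG gH e /fsetUP [] ?; [apply: gG|apply: gH]. Qed.

Lemma graph0 : is_graph fset0.
Proof. by move=> e; rewrite in_fset0. Qed.

Definition ind (M : gm_family) (X : graph) : bool := M X X.

Lemma indM M G X : graph_matroid_family M -> is_graph G -> X `<=` G -> M G X = ind M X.
Proof.
case=> _ _ hres gG sub; rewrite /ind (hres G X) //; split => //; exact: sub_graph sub.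
Qed.

Lemma ind0 M : graph_matroid_family M -> ind M fset0.
Proof. by case=> hmat _ _; case: (hmat _ graph0). Qed.

Lemma ind_sub M X Y : graph_matroid_family M -> is_graph Y -> ind M Y -> X `<=` Y -> ind M X.
Proof.
move=> hM gY iY sub; have := hM; case=> hmat _ _; case: (hmat Y gY) => _ _ hdown _.
by rewrite -(indM hM gY sub); apply: hdown iY sub.
Qed.

Lemma ind_aug M X Y : graph_matroid_family M -> is_graph X -> is_graph Y ->
  ind M X -> ind M Y -> #|` X| < #|` Y| -> exists2 y, y \in Y `\` X & ind M (y |` X).
Proof.
move=> hM gX gY iX iY lt; have gU := graphU gX gY.
have := hM; case=> hmat _ _; case: (hmat _ gU) => _ _ _ haug.
have [y yYX hy] : exists2 y, y \in Y `\` X & M (X `|` Y) (y |` X).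
  by apply: haug => //; rewrite (indM hM gU) ?fsubsetUl ?fsubsetUr.
exists y => //; rewrite -(indM hM gU) //.
rewrite fsubUset fsubsetUl andbT fsub1set; apply/fsetUP; right.
by move/fsetDP: yYX => [].
Qed.

Lemma ind_iso M f X : graph_matroid_family M -> is_graph X ->
  {in vertices X &, injective f} -> ind M (gmap f X) = ind M X.
Proof.
move=> hM gX inj; have := hM; case=> _ hiso _.
by rewrite /ind (hiso f X (gmap f X)) //; [exact: gmap_graph|exact: gmap_iso].
Qed.

Lemma rkE M G : graph_matroid_family M -> is_graph G ->
  rk M G = \max_(X <- fpowerset G | ind M X) #|` X|.
Proof.
move=> hM gG; rewrite /rk big_seq_cond [RHS]big_seq_cond; apply: eq_bigl => X.
case: (boolP (X \in fpowerset G)) => //= h; rewrite (indM hM gG) //.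
by rewrite -fpowersetE.
Qed.

Lemma rk_le M G : graph_matroid_family M -> is_graph G -> rk M G <= #|` G|.
Proof.
move=> hM gG; rewrite (rkE hM gG); apply/bigmax_leqP_seq => X; rewrite fpowersetE.
by move=> sub _; apply: fsubset_leq_card.
Qed.

Lemma rk_ind M G : graph_matroid_family M -> is_graph G -> ind M G -> rk M G = #|` G|.
Proof.
move=> hM gG iG; apply/eqP; rewrite eqn_leq rk_le //= (rkE hM gG).
by apply: leq_bigmax_seq => //; rewrite fpowersetE fsubset_refl.
Qed.

Lemma rk_dep M G : graph_matroid_family M -> is_graph G -> ~~ ind M G -> rk M G < #|` G|.
Proof.
move=> hM gG dG; have : G != fset0 by apply: contraNneq dG => ->; exact: ind0.
rewrite -cardfs_gt0 => G0.
rewrite (rkE hM gG); case: (posnP (\max_(X <- fpowerset G | ind M X) #|` X|)) => [->//|] hpos.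
have [X XG [iX le]] := bigmax_attain hpos (leqnn _).
have : X `<` G.
  rewrite fproperEneq -fpowersetE XG andbT; apply: contraNneq dG => <-; exact: iX.
rewrite fproperEcard => /andP [_ lt]; exact: leq_ltn_trans le lt.
Qed.

Lemma circuitP M G : graph_matroid_family M -> is_graph G ->
  circuit M G <-> ~~ ind M G /\ (forall e, e \in G -> ind M (G `\ e)).
Proof.
move=> hM gG; have cD e : e \in G -> #|` G `\ e| = #|` G| - 1.
  by move=> eG; rewrite (cardfsD1 e G) eG add1n subn1.
have gD e : is_graph (G `\ e) by apply: sub_graph gG _; apply: fsubD1set.
split.
  case=> lt hall; split.
    by apply: contraTN lt => iG; rewrite (rk_ind hM gG iG) ltnn.
  move=> e eG; apply: contraT => dG; have := rk_dep hM (gD e) dG.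
  by rewrite (hall e eG) (cD e eG) ltnn.
case=> dG hall; split; first exact: rk_dep.
by move=> e eG; rewrite (rk_ind hM (gD e) (hall e eG)) cD.
Qed.

Definition stc (c : nat) (S : {fset nat}) : graph := (fun x : nat => [fset c; x]) @` S.

Lemma star_stc m : star m = stc 0 [fset x | x in iota 1 m].
Proof. by []. Qed.

Lemma mem_stc (c : nat) (S : {fset nat}) (e : {fset nat}) : reflect (exists2 x, x \in S & e = [fset c; x]) (e \in stc c S).
Proof. by apply: (iffP (imfsetP _ _ _ _)). Qed.

Lemma stc_graph (c : nat) (S : {fset nat}) : c \notin S -> is_graph (stc c S).
Proof.
move=> cS e /mem_stc [x xS ->]; rewrite cardfs2; case: eqP => // cx.
by move: cS; rewrite cx xS.
Qed.

Lemma fset2_inj (c x y : nat) : x != c -> y != c -> [fset c; x] = [fset c; y] -> x = y.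
Proof.
move=> xc yc h; have : x \in [fset c; y] by rewrite -h !inE eqxx orbT.
by rewrite !inE (negPf xc) /= => /eqP.
Qed.

Lemma card_stc (c : nat) (S : {fset nat}) : c \notin S -> #|` stc c S| = #|` S|.
Proof.
move=> cS; rewrite card_in_imfset // => x y xS yS /=; apply: fset2_inj.
  by apply: contraNneq cS => <-.
by apply: contraNneq cS => <-.
Qed.

Lemma vertices_stc (c : nat) (S : {fset nat}) (x : nat) : x \in vertices (stc c S) -> x \in c |` S.
Proof.
case/verticesP => e /mem_stc [y yS ->]; rewrite !inE => /orP [->//|/eqP ->].
by rewrite yS orbT.
Qed.

Lemma gmap_stc (f : nat -> nat) (c : nat) (S : {fset nat}) : gmap f (stc c S) = stc (f c) (f @` S).
Proof.
apply/fsetP => e; apply/imfsetP/mem_stc.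
  move=> [e' /mem_stc [x xS ->] ->]; exists (f x); first by apply: in_imfset.
  by rewrite imfset_fset2.
move=> [y /imfsetP [x /= xS ->] ->]; exists [fset c; x]; last by rewrite imfset_fset2.
by apply/mem_stc; exists x.
Qed.

Lemma star_map (c : nat) (S : {fset nat}) (c' : nat) (S' : {fset nat}) : c \notin S -> c' \notin S' -> #|` S| = #|` S'| ->
  exists f : nat -> nat, [/\ {in c |` S &, injective f}, f c = c' & f @` S = S'].
Proof.
move=> cS cS' hc.
pose s := enum_fset S; pose s' := enum_fset S'.
have hs : size s = size s' by [].
pose f z := if z == c then c' else nth c' s' (index z s).
have fS z : z \in S -> f z = nth c' s' (index z s).
  by move=> zS; rewrite /f; case: eqP => // zc; move: cS; rewrite -zc zS.
have fin z : z \in S -> f z \in S'.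
  move=> zS; rewrite fS //; apply: mem_nth; rewrite -hs index_mem; exact: zS.
exists f; split; last first.
- apply/fsetP => y; apply/imfsetP/idP => [[z /= zS ->]|yS']; first exact: fin.
  have iy : index y s' < size s by rewrite hs index_mem.
  exists (nth c s (index y s')); first by apply: mem_nth.
  rewrite fS ?index_uniq ?nth_index //; last by apply: mem_nth.
  exact: fset_uniq.
- by rewrite /f eqxx.
move=> x y; rewrite !inE => /orP [/eqP ->|xS] /orP [/eqP ->|yS] //.
- move=> h; have := fin y yS; rewrite -h /f eqxx => cin; by rewrite cin in cS'.
- move=> h; have := fin x xS; rewrite h /f eqxx => cin; by rewrite cin in cS'.
rewrite !fS // => /eqP; rewrite nth_uniq ?fset_uniq // -?hs ?index_mem // => /eqP hi.
by rewrite -(nth_index c xS) -(nth_index c yS) hi.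
Qed.

Lemma stc_iso M (c : nat) (S : {fset nat}) (c' : nat) (S' : {fset nat}) : graph_matroid_family M -> c \notin S -> c' \notin S' ->
  #|` S| = #|` S'| ->
  ind M (stc c S) = ind M (stc c' S') /\ isomorphic (stc c S) (stc c' S').
Proof.
move=> hM cS cS' hc; have [f [inj fc fS]] := star_map cS cS' hc.
have inj' : {in vertices (stc c S) &, injective f}.
  by move=> x y /vertices_stc xS /vertices_stc yS; apply: inj.
have e : gmap f (stc c S) = stc c' S' by rewrite gmap_stc fc fS.
split; first by rewrite -e ind_iso //; exact: stc_graph.
by exists f; rewrite -e; apply: gmap_iso => //; exact: stc_graph.
Qed.

Lemma stcD (c : nat) (S : {fset nat}) (x : nat) : c \notin S -> x != c ->
  stc c S `\ [fset c; x] = stc c (S `\ x).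
Proof.
move=> cS xc; apply/fsetP => e; apply/fsetD1P/mem_stc.
  case=> ne /mem_stc [y yS ey]; exists y => //; apply/fsetD1P; split => //.
  by apply: contraNneq ne => yx; rewrite ey yx.
case=> y /fsetD1P [yx yS] ->; split; last by apply/mem_stc; exists y.
apply/negP => /eqP h; move/negP: yx; apply; apply/eqP.
by apply: fset2_inj h => //; apply: contraNneq cS => <-.
Qed.

Lemma fset2E (e : {fset nat}) a b : #|` e| = 2 -> a \in e -> b \in e -> a != b ->
  e = [fset a; b].
Proof.
move=> he ae be ab; apply/eqP; rewrite eq_sym eqEfcard he cardfs2 ab leqnn andbT.
by rewrite fsubUset !fsub1set ae be.
Qed.

Lemma fresh (V : {fset nat}) : exists B, forall x, x \in V -> x < B.
Proof.
exists (\max_(x <- V) x.+1) => x xV.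
by apply: (leq_bigmax_seq (F := fun x => x.+1) x xV).
Qed.

Definition rng (B k : nat) : {fset nat} := [fset x | x in iota B k].

Lemma card_rng B k : #|` rng B k| = k.
Proof. by rewrite card_fseq undup_id ?iota_uniq // size_iota. Qed.

Lemma mem_rng B k x : (x \in rng B k) = (B <= x < B + k).
Proof. by rewrite !inE mem_iota. Qed.

Lemma card_star k : #|` star k| = k.
Proof. by rewrite star_stc card_stc ?card_rng // mem_rng. Qed.

Lemma deg_ge1 (G : graph) v : v \in vertices G -> 1 <= deg G v.
Proof.
case/verticesP => e eG ve; rewrite /deg cardfs_gt0; apply/fset0Pn; exists e.
by rewrite !inE eG ve.
Qed.

Lemma pendant (G : graph) : is_graph G -> min_deg_one G ->
  exists u v, [/\ u != v, [fset u; v] \in G &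
     forall e, e \in G -> v \in e -> e = [fset u; v]].
Proof.
move=> gG [[v [_ hd]] _]; move: hd; rewrite /deg => /eqP /cardfs1P [e0 he0].
have : e0 \in [fset e in G | v \in e] by rewrite he0 fset11.
rewrite !inE => /andP [e0G ve0].
have [p [q [pq e0E]]] := card2P (gG _ e0G).
have [u [uv ue0]] : exists u, u != v /\ u \in e0.
  move: ve0; rewrite e0E !inE => /orP [] /eqP ->.
    by exists q; rewrite eq_sym pq !inE eqxx orbT.
  by exists p; rewrite pq !inE eqxx.
have e0uv : e0 = [fset u; v] by apply: fset2E => //; apply: gG.
exists u, v; split => //; first by rewrite -e0uv.
move=> e eG ve; have : e \in [fset e in G | v \in e] by rewrite !inE eG ve.
by rewrite he0 => /fset1P ->.
Qed.

Lemma imfset_idin (f : nat -> nat) (e : {fset nat}) : {in e, forall x, f x = x} -> f @` e = e.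
Proof.
move=> h; apply/fsetP => x; apply/imfsetP/idP => [[y ye ->]|xe]; first by rewrite h.
by exists x; rewrite ?h.
Qed.

Lemma gmap_idin (f : nat -> nat) (X : graph) :
  (forall e, e \in X -> {in e, forall x, f x = x}) -> gmap f X = X.
Proof.
move=> h; apply/fsetP => e; apply/imfsetP/idP => [[e' e'X ->]|eX].
  by rewrite imfset_idin //; apply: h.
by exists e; rewrite ?imfset_idin //; apply: h.
Qed.

Lemma swap_ind M (G : graph) u v w : graph_matroid_family M -> is_graph G ->
  u != v -> [fset u; v] \in G -> (forall e, e \in G -> v \in e -> e = [fset u; v]) ->
  w \notin vertices G ->
  ind M ([fset u; w] |` (G `\ [fset u; v])) = ind M G.
Proof.
move=> hM gG uv uvG pend wG.
pose f z := if z == v then w else if z == w then v else z.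
have fK : involutive f.
  move=> z; rewrite /f.
  case: (z =P v) => [->|zv]; first by rewrite eqxx; case: (w =P v) => [->|_]; rewrite ?eqxx.
  case: (z =P w) => [->|zw]; first by rewrite !eqxx.
  by case: (z =P v) => //; case: (z =P w).
have vG : v \in vertices G by apply/verticesP; exists [fset u; v]; rewrite // !inE eqxx orbT.
have uG : u \in vertices G by apply/verticesP; exists [fset u; v]; rewrite // !inE eqxx.
have wv : w != v by apply: contraNneq wG => ->.
have wu : w != u by apply: contraNneq wG => ->.
have fu : f u = u by rewrite /f (negPf uv) eq_sym (negPf wu).
have fv : f v = w by rewrite /f eqxx.
have E : gmap f G = [fset u; w] |` (G `\ [fset u; v]).
  rewrite -{1}(fsetD1K uvG) /gmap imfsetU1 imfset_fset2 fu fv.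
  congr (_ |` _); apply: gmap_idin => e /fsetD1P [ne eG] x xe.
  rewrite /f; case: (x =P v) => [xv|_].
    by move: ne; rewrite (pend e eG) ?eqxx // -xv.
  case: (x =P w) => // xw; move: wG; rewrite -xw => /negP; case.
  by apply/verticesP; exists e.
rewrite -E ind_iso //; apply: (can_in_inj (g := f)) => z _; exact: fK.
Qed.

Lemma claim2 M (G : graph) u v (W : {fset nat}) : graph_matroid_family M -> is_graph G ->
  circuit M G -> u != v -> [fset u; v] \in G ->
  (forall e, e \in G -> v \in e -> e = [fset u; v]) ->
  (forall w, w \in W -> w \notin vertices G) -> ind M (stc u W) -> #|` W| < #|` G|.
Proof.
move=> hM gG cG uv uvG pend hW iS.
have [dG hall] := (circuitP hM gG).1 cG.
have uG : u \in vertices G by apply/verticesP; exists [fset u; v]; rewrite // !inE eqxx.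
have uW : u \notin W by apply/negP => /hW; rewrite uG.
have iA := hall _ uvG.
have cA : #|` G `\ [fset u; v]| = #|` G| - 1 by rewrite (cardfsD1 [fset u; v] G) uvG; lia.
have G0 : 0 < #|` G| by rewrite cardfs_gt0; apply/fset0Pn; exists [fset u; v].
have gA : is_graph (G `\ [fset u; v]) by apply: sub_graph gG _; apply: fsubD1set.
rewrite ltnNge; apply/negP => le.
have lt : #|` G `\ [fset u; v]| < #|` stc u W| by rewrite card_stc // cA; lia.
have [y /fsetDP [yS _] iy] := ind_aug hM gA (stc_graph uW) iA iS lt.
case/mem_stc: yS => w wW yE; rewrite yE swap_ind // in iy; first by rewrite iy in dG.
exact: hW.
Qed.

Lemma claim3 M (G : graph) u v (W : {fset nat}) a : graph_matroid_family M -> is_graph G ->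
  circuit M G -> u != v -> [fset u; v] \in G ->
  (forall e, e \in G -> v \in e -> e = [fset u; v]) ->
  (forall w, w \in W -> w \notin vertices G) -> ind M (stc u W) ->
  #|` W| = #|` G| - 1 -> a \in G -> a != [fset u; v] -> ~~ ind M (a |` stc u W).
Proof.
move=> hM gG cG uv uvG pend hW iS cW aG auv; apply/negP => ia.
have [dG hall] := (circuitP hM gG).1 cG.
have uG : u \in vertices G by apply/verticesP; exists [fset u; v]; rewrite // !inE eqxx.
have uW : u \notin W by apply/negP => /hW; rewrite uG.
have iA := hall _ uvG.
have cA : #|` G `\ [fset u; v]| = #|` G| - 1 by rewrite (cardfsD1 [fset u; v] G) uvG; lia.
have G0 : 0 < #|` G| by rewrite cardfs_gt0; apply/fset0Pn; exists [fset u; v].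
have gA : is_graph (G `\ [fset u; v]) by apply: sub_graph gG _; apply: fsubD1set.
have gS := stc_graph uW.
have gaS : is_graph (a |` stc u W).
  apply: sub_graph (graphU gG gS) _.
  by rewrite fsubUset fsub1set !inE aG /= fsubsetUr.
have aS : a \notin stc u W.
  apply/negP => /mem_stc [w wW aE]; move: (hW w wW) => /negP; apply.
  by apply/verticesP; exists a; rewrite // aE !inE eqxx orbT.
have aA : a \in G `\ [fset u; v] by rewrite !inE auv aG.
have lt : #|` G `\ [fset u; v]| < #|` a |` stc u W|.
  by rewrite cardfsU1 aS card_stc // cW cA; lia.
have [y /fsetDP [yS yA] iy] := ind_aug hM gA gaS iA ia lt.
case/fset1UP: yS => [ya|]; first by rewrite ya aA in yA.
case/mem_stc => w wW yE; rewrite yE swap_ind // in iy; first by rewrite iy in dG.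
exact: hW.
Qed.

Lemma transport M u (W : {fset nat}) x y p q : graph_matroid_family M ->
  x != y -> p != q -> x \notin u |` W -> y \notin u |` W ->
  p \notin u |` W -> q \notin u |` W -> u \notin W ->
  ind M ([fset p; q] |` stc u W) = ind M ([fset x; y] |` stc u W).
Proof.
move=> hM xy pq xU yU pU qU uW.
pose h z := if z == x then p else if z == y then q else z.
have hx : h x = p by rewrite /h eqxx.
have hy : h y = q by rewrite /h eq_sym (negPf xy) eqxx.
have hU z : z \in u |` W -> h z = z.
  move=> zU; rewrite /h; case: (z =P x) => [zx|_]; first by rewrite -zx zU in xU.
  by case: (z =P y) => [zy|_] //; rewrite -zy zU in yU.
have gS := stc_graph uW.
have g1 : is_graph [fset [fset x; y]] by move=> e /fset1P ->; rewrite cardfs2 xy.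
have g : is_graph ([fset x; y] |` stc u W) by apply: graphU.
have V z : z \in vertices ([fset x; y] |` stc u W) -> [\/ z = x, z = y | z \in u |` W].
  case/verticesP => e /fset1UP [->|eS] ze.
    by move: ze; rewrite !inE => /orP [] /eqP ->; [constructor 1|constructor 2].
  by constructor 3; apply: vertices_stc; apply/verticesP; exists e.
have E : gmap h ([fset x; y] |` stc u W) = [fset p; q] |` stc u W.
  rewrite /gmap imfsetU1 imfset_fset2 hx hy; congr (_ |` _).
  apply: gmap_idin => e eS z ze; apply: hU; apply: vertices_stc.
  by apply/verticesP; exists e.
rewrite -E ind_iso //.
move=> z1 z2 /V [->|->|z1U] /V [->|->|z2U] //; rewrite ?hx ?hy ?hU //.
- by move=> /eqP; rewrite (negPf pq).
- by move=> E2; rewrite E2 z2U in pU.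
- by move=> /eqP; rewrite eq_sym (negPf pq).
- by move=> E2; rewrite E2 z2U in qU.
- by move=> E2; rewrite -E2 z1U in pU.
- by move=> E2; rewrite -E2 z1U in qU.
Qed.

Lemma K_graph n : is_graph (K n).
Proof. by move=> e; rewrite !inE => /andP [_ /eqP]. Qed.

Lemma K_big M n L : graph_matroid_family M -> rk M (K n) = L -> 0 < L ->
  exists2 T, T `<=` K n & ind M T /\ L <= #|` T|.
Proof.
move=> hM hL L0; rewrite (rkE hM (@K_graph n)) in hL.
have [T TK [iT le]] := bigmax_attain L0 (eq_leq (esym hL)).
by exists T; rewrite // -fpowersetE.
Qed.

Lemma shift M B (T0 : graph) : graph_matroid_family M -> is_graph T0 -> ind M T0 ->
  [/\ is_graph (gmap (addn B) T0), ind M (gmap (addn B) T0),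
      #|` gmap (addn B) T0| = #|` T0| &
      forall y z, y \in gmap (addn B) T0 -> z \in y -> B <= z].
Proof.
move=> hM g i.
have inj : {in vertices T0 &, injective (addn B)} by move=> x y _ _; apply: addnI.
split.
- exact: gmap_graph.
- by rewrite ind_iso.
- rewrite card_in_imfset // => e1 e2 _ _ /= E; apply/fsetP => z.
  have mI (e : {fset nat}) : (addn B z \in addn B @` e) = (z \in e) by apply: mem_imfset; exact: addnI.
  by rewrite -mI E mI.
- by move=> y z /imfsetP [e _ ->] /imfsetP [z' _ ->]; rewrite leq_addr.
Qed.

Lemma exdep M (G : graph) u v : graph_matroid_family M -> is_graph G -> circuit M G ->
  u != v -> [fset u; v] \in G -> (forall e, e \in G -> v \in e -> e = [fset u; v]) ->
  ~~ ind M (star #|` G|).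
Proof.
move=> hM gG cG uv uvG pend.
have [B hB] := fresh (vertices G).
have hW : forall w, w \in rng B #|` G| -> w \notin vertices G.
  by move=> w; rewrite mem_rng => /andP [Bw _]; apply/negP => /hB; rewrite ltnNge Bw.
have uG : u \in vertices G by apply/verticesP; exists [fset u; v]; rewrite // !inE eqxx.
have uW : u \notin rng B #|` G| by apply/negP => /hW; rewrite uG.
have h0 : 0 \notin rng 1 #|` G| by rewrite mem_rng.
have hc : #|` rng B #|` G| | = #|` rng 1 #|` G| | by rewrite !card_rng.
case: (stc_iso hM uW h0 hc) => E _.
change (~~ ind M (stc 0 (rng 1 #|` G|))); rewrite -E.
by apply/negP => /(claim2 hM gG cG uv uvG pend hW); rewrite card_rng ltnn.
Qed.

Theorem proposition2p5 (M : gm_family) (L : nat) :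
  graph_matroid_family M -> bounded M -> limit_rank M L ->
  (exists G, is_graph G /\ small_circuit M L G /\ min_deg_one G) ->
  exists m, 2 <= m /\
    (small_circuit M L (star m) /\ #|` star m| <= m /\ min_deg_one (star m)) /\
    (forall G, is_graph G -> small_circuit M L G -> #|` G| <= m ->
       min_deg_one G -> isomorphic G (star m)).
Proof.
move=> hM _ [N0 hN] [G0 [gG0 [[cG0 sG0] md0]]].
have [u0 [v0 [uv0 uvG0 pend0]]] := pendant gG0 md0.
have dep0 := exdep hM gG0 cG0 uv0 uvG0 pend0.
have exP : exists k, ~~ ind M (star k) by exists #|` G0|.
case: (ex_minnP exP) => m dm mmin.
have mG0 : m <= #|` G0| := mmin _ dep0.
have indlt k : k < m -> ind M (star k).
  by move=> km; apply: contraTT km => dk; rewrite -leqNgt; apply: mmin.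
have G00 : 0 < #|` G0| by rewrite cardfs_gt0; apply/fset0Pn; exists [fset u0; v0].
have L0 : 0 < L by apply: leq_trans G00 sG0.
have mL : m <= L by apply: leq_trans mG0 sG0.
have [T0 T0K [iT0 LT0]] := K_big hM (hN N0 (leqnn N0)) L0.
have gT0 : is_graph T0 := sub_graph (@K_graph N0) T0K.
have m0 : m != 0.
  apply/eqP => m0; rewrite m0 in dm; move/negP: dm; apply.
  by rewrite (_ : star 0 = fset0) ?ind0 //; apply: cardfs0_eq; rewrite card_star.
have m1 : m != 1.
  apply/eqP => m1; rewrite m1 in dm; move/negP: dm; apply.
  have : T0 != fset0 by rewrite -cardfs_gt0; apply: leq_trans L0 LT0.
  case/fset0Pn => e eT0.
  have [p [q [pq eE]]] := card2P (gT0 _ eT0).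
  have ie : ind M [fset e] by apply: ind_sub hM gT0 iT0 _; rewrite fsub1set.
  have h0 : p \notin [fset q] by rewrite inE.
  have h1 : 0 \notin rng 1 1 by rewrite mem_rng.
  have hc : #|` [fset q]| = #|` rng 1 1| by rewrite card_rng cardfs1.
  case: (stc_iso hM h0 h1 hc) => E _.
  change (ind M (stc 0 (rng 1 1))); rewrite -E.
  by move: ie; rewrite /stc imfset_fset1 eE.
have m2 : 2 <= m by lia.
have mm : m - 1 < m by rewrite subn1 ltn_predL lt0n m0.
have Rm : 0 \notin rng 1 m by rewrite mem_rng.
exists m; split => //; split.
  split; last first.
    split; first by rewrite card_star.
    split; last by move=> w wV; apply: deg_ge1.
    exists 1; split.
      apply/verticesP; exists [fset 0; 1]; last by rewrite !inE eqxx orbT.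
      by apply/mem_stc; exists 1 => //; rewrite mem_rng; lia.
    rewrite /deg; apply/eqP/cardfs1P; exists [fset 0; 1]; apply/fsetP => e.
    rewrite !inE; apply/idP/idP.
      case/andP => /mem_stc [x xR ->]; rewrite !inE => /orP [//|/eqP <-].
      by rewrite eqxx.
    move=> /eqP ->; rewrite !inE eqxx orbT andbT; apply/mem_stc; exists 1 => //.
    by rewrite mem_rng; lia.
  split; last by rewrite card_star.
  change (circuit M (stc 0 (rng 1 m))).
  apply/(circuitP hM (stc_graph Rm)); split => // e /mem_stc [x xR ->].
  rewrite stcD //; last by apply: contraTneq xR => ->; rewrite mem_rng.
  have h1 : 0 \notin rng 1 m `\ x by rewrite in_fsetD1 mem_rng andbF.
  have h2 : 0 \notin rng 1 (m - 1) by rewrite mem_rng.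
  have hc : #|` rng 1 m `\ x| = #|` rng 1 (m - 1)|.
    by rewrite card_rng; have := cardfsD1 x (rng 1 m); rewrite xR card_rng; lia.
  by case: (stc_iso hM h1 h2 hc) => -> _; apply: indlt.
move=> G gG [cG sG] leG mdG.
have [u [v [uv uvG pend]]] := pendant gG mdG.
have Gm : #|` G| = m.
  by apply/eqP; rewrite eqn_leq leG mmin // (exdep hM gG cG uv uvG pend).
have uG : u \in vertices G by apply/verticesP; exists [fset u; v]; rewrite // !inE eqxx.
have allu : forall a, a \in G -> u \in a.
  move=> a aG; apply: contraT => ua.
  have auv : a != [fset u; v] by apply: contraNneq ua => ->; rewrite !inE eqxx.
  have [x [y [xy aE]]] := card2P (gG _ aG).
  have [B1 hB1] := fresh (vertices G).
  pose W := rng B1 (m - 1).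
  have hW : forall w, w \in W -> w \notin vertices G.
    by move=> w; rewrite mem_rng => /andP [Bw _]; apply/negP => /hB1; rewrite ltnNge Bw.
  have uW : u \notin W by apply/negP => /hW; rewrite uG.
  have h0 : 0 \notin rng 1 (m - 1) by rewrite mem_rng.
  have hc : #|` W| = #|` rng 1 (m - 1)| by rewrite !card_rng.
  have iS : ind M (stc u W) by case: (stc_iso hM uW h0 hc) => -> _; apply: indlt.
  have cW : #|` W| = #|` G| - 1 by rewrite card_rng Gm.
  have d3 := @claim3 M G u v W a hM gG cG uv uvG pend hW iS cW aG auv.
  rewrite aE in d3.
  have [B2 hB2] := fresh (vertices G `|` W).
  have [gT iT cT hT] := shift B2 hM gT0 iT0.
  have lt : #|` stc u W| < #|` gmap (addn B2) T0|.
    by rewrite cT card_stc // card_rng; apply: leq_trans mm (leq_trans mL LT0).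
  have [z /fsetDP [zT _] iz] := ind_aug hM (stc_graph uW) gT iS iT lt.
  have [p [q [pq zE]]] := card2P (gT _ zT).
  have notU r : r \in z -> r \notin u |` W.
    move=> rz; have := hT z r zT rz; apply: contraTN => rU.
    rewrite -ltnNge; apply: hB2; move: rU; rewrite in_fset1U => /orP [/eqP ->|rW].
      by apply/fsetUP; left.
    by apply/fsetUP; right.
  have xa : x \in a by rewrite aE !inE eqxx.
  have ya : y \in a by rewrite aE !inE eqxx orbT.
  have aV r : r \in a -> r \notin u |` W.
    move=> ra; rewrite in_fset1U negb_or; apply/andP; split.
      by apply: contraNneq ua => <-.
    apply/negP => rW; move: (hW r rW) => /negP; apply; apply/verticesP; by exists a.
  have pz : p \in z by rewrite zE !inE eqxx.
  have qz : q \in z by rewrite zE !inE eqxx orbT.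
  move: iz; rewrite zE (transport hM xy pq (aV x xa) (aV y ya) (notU p pz) (notU q qz) uW).
  by rewrite (negPf d3).
pose V' := vertices G `\ u.
have uV' : u \notin V' by rewrite in_fsetD1 eqxx.
have GE : G = stc u V'.
  apply/fsetP => e; apply/idP/mem_stc.
    move=> eG; have ue := allu e eG; have [p [q [pq eE]]] := card2P (gG _ eG).
    have [z [zu ze]] : exists z, z != u /\ z \in e.
      move: ue; rewrite eE !inE => /orP [] /eqP ->.
        by exists q; rewrite eq_sym pq !inE eqxx orbT.
      by exists p; rewrite pq !inE eqxx.
    exists z; first by rewrite in_fsetD1 zu; apply/verticesP; exists e.
    by apply: fset2E => //; [apply: gG | rewrite eq_sym].
  case=> z /fsetD1P [zu /verticesP [e' eG ze]] ->.
  by rewrite -(fset2E (gG _ eG) (allu e' eG) ze) // eq_sym.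
have hc : #|` V'| = #|` rng 1 m| by rewrite card_rng -Gm [in RHS]GE card_stc.
case: (stc_iso hM uV' Rm hc) => _ iso.
by rewrite GE.
Qed.
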